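(* (ZFC.) Let $F$ be any set of functions on $[0,1]$, each of arity $\alpha$ with $0<\alpha\le\omega$ (i.e. with finitely or countably many arguments), such that $|F|\le\mathfrak{c}$. Then $\mathsf{Agg}$ is not generated by $F$ as a $\sigma$-clone: not every aggregation function of finite arity belongs to the $\sigma$-clone generated by $F$.
   Context: $\mathfrak{c}=2^{\aleph_0}$; the axiom of choice is assumed. $\omega$ is the first infinite ordinal. An $n$-ary aggregation function on $[0,1]$ is a function $f\colon[0,1]^n\to[0,1]$ nondecreasing in each coordinate with $f(0,\dots,0)=0$, $f(1,\dots,1)=1$; $\mathsf{Agg}$ is the set of all aggregation functions of all finite arities. For an $\alpha$-ary $f$ and $\beta$-ary functions $g_i$, $i<\alpha$ ($0<\alpha,\beta\le\omega$), the composition $f\circ(g_i:i<\alpha)$ is $\mathbf{x}\mapsto f((g_i(\mathbf{x}))_{i<\alpha})$. A $\sigma$-clone is a set of functions on $[0,1]$ of arities $0<\alpha\le\omega$ containing all projections and closed under such compositions; the $\sigma$-clone generated by $F$ is the smallest one containing $F$. *)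

(* Defs.v *)
From Stdlib Require Import Reals.
From mathcomp Require Import all_boot.

Set Implicit Arguments.
Unset Strict Implicit.
Unset Printing Implicit Defensive.

Definition I01 : Type := {x : R | Rle 0 x /\ Rle x 1}.

Inductive arity : Type := ar_fin (n : nat) | ar_omega.

Definition valid_ar (a : arity) : Prop :=
  match a with ar_fin n => (0 < n)%N | ar_omega => True end.

Definition dom (a : arity) : Type :=
  match a with ar_fin n => 'I_n | ar_omega => nat end.

Definition op (a : arity) : Type := (dom a -> I01) -> I01.

Definition func : Type := {a : arity & op a}.

Definition mkfunc (a : arity) (f : op a) : func := existT op a f.

Definition proj (a : arity) (i : dom a) : op a := fun x => x i.

Definition compose (a b : arity) (f : op a) (g : dom a -> op b) : op b :=
  fun x => f (fun i => g i x).

Definition is_sigma_clone (C : func -> Prop) : Prop :=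
  (forall h : func, C h -> valid_ar (projT1 h)) /\
  (forall (a : arity) (i : dom a), valid_ar a -> C (mkfunc (proj i))) /\
  (forall (a b : arity) (f : op a) (g : dom a -> op b),
      valid_ar a -> valid_ar b ->
      C (mkfunc f) -> (forall i, C (mkfunc (g i))) ->
      C (mkfunc (compose f g))).

Definition in_sigma_clone_gen (F : func -> Prop) (h : func) : Prop :=
  forall C : func -> Prop, is_sigma_clone C ->
    (forall k, F k -> C k) -> C h.

Definition is_aggregation (n : nat) (f : op (ar_fin n)) : Prop :=
  (forall x y : 'I_n -> I01,
      (forall i, Rle (proj1_sig (x i)) (proj1_sig (y i))) ->
      Rle (proj1_sig (f x)) (proj1_sig (f y))) /\
  (forall x : 'I_n -> I01, (forall i, proj1_sig (x i) = R0) ->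
      proj1_sig (f x) = R0) /\
  (forall x : 'I_n -> I01, (forall i, proj1_sig (x i) = R1) ->
      proj1_sig (f x) = R1).

(* |F| <= continuum = 2^aleph_0 = |nat -> bool|. *)
Definition card_le_continuum (F : func -> Prop) : Prop :=
  exists e : {h : func | F h} -> (nat -> bool), injective e.

(* Main.v *)
Require Import Defs.
From Stdlib Require Import Reals Lra ClassicalEpsilon Eqdep_dec FunctionalExtensionality Classical.
From Coquelicot Require Import Coquelicot.
From mathcomp Require Import all_boot.
Set Implicit Arguments.
Unset Strict Implicit.

Open Scope R_scope.

Definition ac (c : nat -> bool) (n : nat) : R := if c n then (/3)^n else 0.
Definition sc (c : nat -> bool) : R := Series (ac c).

Lemma geom3 : Rabs (/3) < 1.
Proof. rewrite Rabs_pos_eq; lra. Qed.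

Lemma ac_bnd c n : 0 <= ac c n <= (/3)^n.
Proof. rewrite /ac; case: (c n); split; try lra; apply: pow_le; lra. Qed.

Lemma ac_ex c : ex_series (ac c).
Proof.
apply: (@ex_series_le _ _ _ (fun n => (/3)^n)); last exact: ex_series_geom geom3.
move=> n; rewrite /norm /= /abs /=; rewrite Rabs_pos_eq; by case: (ac_bnd c n).
Qed.

Lemma sc_bnd c : 0 <= sc c <= 3/2.
Proof.
split.
  have -> : 0 = Series (fun n => 0 * ac c n) by rewrite Series_scal_l; ring.
  rewrite /sc; apply: Series_le; last exact: ac_ex.
  move=> n; split; [lra|]; case: (ac_bnd c n) => ? ?; lra.
rewrite /sc. have -> : 3/2 = Series (fun n => (/3)^n) by rewrite Series_geom; [field|exact geom3].
apply: Series_le; last exact: ex_series_geom geom3.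
exact: ac_bnd.
Qed.

Lemma sc_step c : sc c = (if c O then 1 else 0) + /3 * sc (fun k => c (S k)).
Proof.
rewrite /sc Series_incr_1; last exact: ac_ex.
rewrite -Series_scal_l. f_equal.
apply: Series_ext => n; rewrite /ac /=; case: (c (S n)) => /=; lra.
Qed.

Lemma sc_inj_n n : forall c c', sc c = sc c' -> c n = c' n.
Proof.
elim: n => [|n IH] c c' E.
  move: E; rewrite (sc_step c) (sc_step c').
  have:= sc_bnd (fun k => c (S k)); have:= sc_bnd (fun k => c' (S k)).
  case: (c O); case: (c' O) => //= ? ? ?; lra.
apply: (IH (fun k => c (S k)) (fun k => c' (S k))).
have H0 : c O = c' O.
  move: E; rewrite (sc_step c) (sc_step c').
  have:= sc_bnd (fun k => c (S k)); have:= sc_bnd (fun k => c' (S k)).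
  case: (c O); case: (c' O) => //= ? ? ?; lra.
move: E; rewrite (sc_step c) (sc_step c') H0 => ?; lra.
Qed.
Close Scope R_scope.
Unset Strict Implicit.

Inductive term (F : func -> Prop) : Type :=
| Leaf (k : {h : func | F h})
| Prj (a : arity) (i : dom a)
| Cmp (a b : arity) (t : term F) (ts : dom a -> term F).

Fixpoint den (F : func -> Prop) (t : term F) (h : func) {struct t} : Prop :=
  match t with
  | Leaf k => h = proj1_sig k
  | Prj a i => valid_ar a /\ h = mkfunc (proj i)
  | Cmp a b t0 ts => valid_ar a /\ valid_ar b /\
      exists (f : op a) (g : dom a -> op b),
        den t0 (mkfunc f) /\ (forall i, den (ts i) (mkfunc (g i))) /\
        h = mkfunc (compose f g)
  end.

Lemma arity_eq_dec (a b : arity) : {a = b} + {a <> b}.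
Proof. decide equality; apply: PeanoNat.Nat.eq_dec. Qed.

Lemma mkfunc_inj (a : arity) (f g : op a) : mkfunc f = mkfunc g -> f = g.
Proof. move=> E; exact: (inj_pair2_eq_dec _ arity_eq_dec _ _ _ _ E). Qed.

Lemma den_fun F (t : term F) : forall h h', den t h -> den t h' -> h = h'.
Proof.
elim: t => [k|a i|a b t0 IH ts IHs] h h' /=.
- by move=> -> ->.
- by move=> [_ ->] [_ ->].
- move=> [_ [_ [f [g [H1 [H2 ->]]]]]] [_ [_ [f' [g' [H1' [H2' ->]]]]]].
  have ef : f = f' by apply: mkfunc_inj; exact: IH H1 H1'.
  have eg : g = g'.
    apply: functional_extensionality => i; apply: mkfunc_inj.
    exact: IHs (H2 i) (H2' i).
  by rewrite ef eg.
Qed.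

Definition Cl F (h : func) : Prop := exists t : term F, den t h.

Lemma Cl_clone F : (forall h, F h -> valid_ar (projT1 h)) -> is_sigma_clone (Cl F).
Proof.
move=> HF; split; [|split].
- move=> h [[k|a i|a b t0 ts]] /=.
  + move=> ->; apply: HF; exact: proj2_sig k.
  + by move=> [Ha ->].
  + by move=> [_ [Hb [f [g [_ [_ ->]]]]]].
- move=> a i Ha; by exists (@Prj F a i).
- move=> a b f g Ha Hb [t Ht] Hg.
  pose ts := fun i => proj1_sig (constructive_indefinite_description _ (Hg i)).
  exists (Cmp b t ts) => /=; split=> //; split=> //; exists f, g; split=> //; split=> //.
  move=> i; exact: proj2_sig (constructive_indefinite_description _ (Hg i)).
Qed.

Lemma F_Cl F h : F h -> Cl F h.
Proof. move=> Fh; by exists (Leaf (exist _ h Fh)). Qed.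

Inductive label (F : func -> Prop) : Type :=
| LNone | LLeaf (k : {h : func | F h}) | LPrj (a : arity) (i : nat) | LCmp (a b : arity).

Definition idx (a : arity) : dom a -> nat :=
  match a return dom a -> nat with ar_fin n => fun i => nat_of_ord i | ar_omega => fun i => i end.

Definition unidx (a : arity) : nat -> option (dom a) :=
  match a return nat -> option (dom a) with
  | ar_fin n => fun j => insub j | ar_omega => fun j => Some j end.

Lemma idxK a (i : dom a) : unidx a (idx i) = Some i.
Proof. case: a i => [n|] i /=; last by []. exact: valK. Qed.

Lemma idx_inj a (i j : dom a) : idx i = idx j -> i = j.
Proof. move=> E; have := idxK i; rewrite E idxK; by case. Qed.

Fixpoint enc F (t : term F) (p : seq nat) {struct t} : label F :=
  match t, p with
  | Leaf k, [::] => LLeaf k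
  | Prj a i, [::] => LPrj F a (idx i)
  | Cmp a b _ _, [::] => LCmp F a b
  | Cmp a b t0 ts, 0 :: p' => enc t0 p'
  | Cmp a b t0 ts, j.+1 :: p' =>
      match unidx a j with Some i => enc (ts i) p' | None => LNone F end
  | _, _ => LNone F
  end.

Lemma enc_inj F (t : term F) : forall t', enc t =1 enc t' -> t = t'.
Proof.
elim: t => [k|a i|a b t0 IH ts IHs] [k'|a' i'|a' b' t0' ts'] E; have := E [::] => //= E0.
- by case: E0 => ->.
- case: E0 => ea; subst a' => /idx_inj ->; done.
- case: E0 => ea eb; subst a' b'.
  have -> : t0 = t0' by apply: IH => p; exact: E (0 :: p).
  have -> : ts = ts'.
    apply: functional_extensionality => i; apply: IHs => p.
    have := E ((idx i).+1 :: p); by rewrite /= idxK.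
  done.
Qed.
Definition natb (m : nat) : nat -> bool := fun n => n == m.
Definition pairb (f g : nat -> bool) : nat -> bool :=
  fun n => if odd n then g n./2 else f n./2.

Lemma natb_inj m m' : natb m = natb m' -> m = m'.
Proof. move=> E; have := congr1 (fun f => f m) E; rewrite /natb eqxx => /esym/eqP; done. Qed.

Lemma pairb_inj f g f' g' : pairb f g = pairb f' g' -> f = f' /\ g = g'.
Proof.
move=> E; split; apply: functional_extensionality => n.
- have := congr1 (fun h => h n.*2) E; by rewrite /pairb odd_double doubleK.
- have := congr1 (fun h => h n.*2.+1) E; by rewrite /pairb /= odd_double /= uphalf_double.
Qed.

Definition arn (a : arity) : nat := match a with ar_fin n => n.+1 | ar_omega => 0 end.
Lemma arn_inj : injective arn.
Proof. by case=> [n|] [m|] //= [->]. Qed.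

Definition lcode F (e : {h : func | F h} -> nat -> bool) (l : label F) : nat -> bool :=
  match l with
  | LNone => pairb (natb 0) (fun _ => false)
  | LLeaf k => pairb (natb 1) (e k)
  | LPrj a i => pairb (natb 2) (pairb (natb (arn a)) (natb i))
  | LCmp a b => pairb (natb 3) (pairb (natb (arn a)) (natb (arn b)))
  end.

Lemma lcode_inj F e : injective e -> injective (@lcode F e).
Proof.
move=> ei [|k|a i|a b] [|k'|a' i'|a' b'] /= /pairb_inj [/natb_inj E1 E2] //.
- by rewrite (ei _ _ E2).
- case/pairb_inj: E2 => /natb_inj/arn_inj -> /natb_inj -> //.
- case/pairb_inj: E2 => /natb_inj/arn_inj -> /natb_inj/arn_inj -> //.
Qed.

Definition Phi F e (phi : seq nat -> label F) : nat -> bool :=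
  fun n => match @unpickle (seq nat * nat)%type n with
           | Some pk => lcode e (phi pk.1) pk.2
           | None => false end.

Lemma Phi_inj F e : injective e -> injective (@Phi F e).
Proof.
move=> ei phi psi E; apply: functional_extensionality => p.
apply: (lcode_inj ei); apply: functional_extensionality => k.
have := congr1 (fun h => h (pickle (p, k))) E; by rewrite /Phi pickleK.
Qed.

Definition Ecode F e (t : term F) : nat -> bool := Phi e (enc t).

Lemma Ecode_inj F e : injective e -> injective (@Ecode F e).
Proof.
move=> ei t t' /(Phi_inj ei) E; apply: enc_inj => p; by rewrite E.
Qed.
Open Scope R_scope.

Definition gA (A : R -> Prop) (u v : R) : R :=
  if Rlt_dec (u + v) 1 then 0 else if Rlt_dec 1 (u + v) then 1
  else if excluded_middle_informative (A u) then 1 else 0.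

Lemma gA_01 A u v : 0 <= gA A u v /\ gA A u v <= 1.
Proof.
rewrite /gA; destruct Rlt_dec; simpl; [split; lra|]; destruct Rlt_dec; simpl; [split; lra|].
destruct excluded_middle_informative; simpl; split; lra.
Qed.

Lemma gA_mono A u v u' v' : u <= u' -> v <= v' -> gA A u v <= gA A u' v'.
Proof.
move=> Hu Hv; rewrite /gA.
destruct (Rlt_dec (u+v) 1) as [H1|H1]; simpl.
  destruct (Rlt_dec (u'+v') 1); simpl; [lra|]; destruct Rlt_dec; simpl; [lra|].
  destruct excluded_middle_informative; simpl; lra.
destruct (Rlt_dec 1 (u+v)) as [H2|H2]; simpl.
  destruct (Rlt_dec (u'+v') 1); simpl; [lra|]; destruct Rlt_dec; simpl; [lra|lra].
destruct (Rlt_dec (u'+v') 1) as [H3|H3]; simpl; [lra|]; destruct (Rlt_dec 1 (u'+v')) as [H4|H4]; simpl.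
  destruct excluded_middle_informative; simpl; lra.
have eu : u' = u by lra. subst u'.
lra.
Qed.

Definition fA (A : R -> Prop) : op (ar_fin 2) :=
  fun x => exist _ (gA A (proj1_sig (x ord0)) (proj1_sig (x ord_max)))
                   (gA_01 A _ _).

Lemma fA_agg A : is_aggregation (fA A).
Proof.
split; [|split].
- move=> x y H; exact: gA_mono.
- move=> x H /=; rewrite !H /gA; destruct Rlt_dec; simpl; try done; lra.
- move=> x H /=; rewrite !H /gA; destruct Rlt_dec; simpl ; [lra|].
  destruct Rlt_dec; simpl; try done; lra.
Qed.

Definition ptI (x : R) (H : 0 <= x <= 1) : I01 := exist _ x (conj (proj1 H) (proj2 H)).

Lemma fA_eq A B x : 0 <= x <= 1 -> fA A = fA B -> (A x <-> B x).
Proof.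
move=> Hx E.
have H1 : 0 <= 1 - x <= 1 by lra.
pose pt : 'I_2 -> I01 := fun i => if i == ord0 then ptI Hx else ptI H1.
have := congr1 (fun f => proj1_sig (f pt)) E => /=.
rewrite /gA /=.
destruct Rlt_dec; simpl; [lra|]; destruct Rlt_dec; simpl; [lra|].
destruct excluded_middle_informative; simpl; destruct excluded_middle_informative; simpl; try tauto; move=> *; lra.
Qed.

Definition sx (c : nat -> bool) : R := 2/3 * sc c.

Lemma sx_01 c : 0 <= sx c <= 1.
Proof. have := sc_bnd c; rewrite /sx; lra. Qed.

Lemma sx_inj : injective sx.
Proof.
move=> c c' E; apply: functional_extensionality => n; apply: sc_inj_n.
move: E; rewrite /sx; lra.
Qed.

Theorem corollary2 (F : func -> Prop) :
  (forall h, F h -> valid_ar (projT1 h)) ->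
  card_le_continuum F ->
  exists (n : nat) (f : op (ar_fin n)),
    (0 < n)%N /\ is_aggregation f /\ ~ in_sigma_clone_gen F (mkfunc f).
Proof.
move=> HF [e ei]; apply: NNPP => Hno.
have all : forall A, Cl F (mkfunc (fA A)).
  move=> A; have : in_sigma_clone_gen F (mkfunc (fA A)).
    apply: NNPP => Hn; apply: Hno; exists 2%N, (fA A); split=> //; split=> //; exact: fA_agg.
  move=> Hin; apply: Hin; [exact: Cl_clone|exact: F_Cl].
pose D := fun x => exists A (t : term F), sx (Ecode e t) = x /\ den t (mkfunc (fA A)) /\ ~ A x.
have [t0 Ht0] := all D.
pose x0 := sx (Ecode e t0).
have Hx0 : 0 <= x0 <= 1 by exact: sx_01.
case: (classic (D x0)) => HD.
  have HD' := HD; case: HD' => [A [t [E1 [E2 E3]]]].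
  have et : t = t0 by apply: (Ecode_inj ei); apply: sx_inj.
  subst t.
  have Eq := fA_eq Hx0 (mkfunc_inj (den_fun E2 Ht0)).
  by apply: E3; apply/Eq.
apply: (HD); exists D, t0; split=> //.
Qed.
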